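(* Let $v$ and $k\ge 2$ be powers of the same prime. Then there exists an $\mathrm{RBIBD}(v,k,1)$ (and hence a $(k,r)$-regular LDPC code of length $vr/k$ and rate at least $(r-k)/r$ based on it, where $r=(v-1)/(k-1)$) if and only if $v-1\equiv 0 \pmod{k-1}$ and $v\equiv 0 \pmod{k}$.
   Context: A $\mathrm{BIBD}(v,k,\lambda)$ is a pair $(X,\mathcal{B})$ where $X$ is a set of $v$ points and $\mathcal{B}$ a collection of $k$-subsets (blocks) such that every pair of distinct points lies in exactly $\lambda$ blocks; each point then lies in the same number $r$ of blocks, with $\lambda(v-1)=r(k-1)$ and $bk=vr$ where $b=|\mathcal{B}|$. It is resolvable, written $\mathrm{RBIBD}(v,k,\lambda)$, if $\mathcal{B}$ can be partitioned into classes each of which partitions $X$. The LDPC code based on the design is the binary linear code having the $v\times b$ point-block incidence matrix as parity-check matrix $H$. The code is $(k,r)$-regular if all columns of $H$ have weight $k$ and all rows weight $r$; its rate is $(b-\mathrm{rank}_2(H))/b$, with $b$ the length. *)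

(* Defs.v *)
From HB Require Import structures.
From mathcomp Require Import all_boot all_order all_algebra.
Set Implicit Arguments. Unset Strict Implicit. Unset Printing Implicit Defensive.
Import GRing.Theory Num.Theory.

(* A design on the point set 'I_v with b blocks B j, j : 'I_b
   (indexing blocks allows a collection/multiset of blocks). *)

Definition is_BIBD (v k lam b : nat) (B : 'I_b -> {set 'I_v}) : Prop :=
  (forall j, #|B j| = k) /\
  (forall x y : 'I_v, x != y -> #|[set j | (x \in B j) && (y \in B j)]| = lam).

(* Resolvable: the blocks can be partitioned into classes (class j = cls j)
   such that each (nonempty) class partitions the point set, i.e. every
   point lies in exactly one block of the class. *)
Definition resolvable (v b : nat) (B : 'I_b -> {set 'I_v}) : Prop :=
  exists cls : 'I_b -> 'I_b,
    forall c : 'I_b, (exists j, cls j = c) ->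
      forall x : 'I_v, #|[set j | (cls j == c) && (x \in B j)]| = 1.

Definition is_RBIBD (v k lam b : nat) (B : 'I_b -> {set 'I_v}) : Prop :=
  is_BIBD k lam B /\ resolvable B.

Definition incidence_mx (v b : nat) (B : 'I_b -> {set 'I_v}) : 'M['F_2]_(v, b) :=
  \matrix_(i < v, j < b) (if i \in B j then 1%R else 0%R).

Definition ldpc_regular (v b : nat) (H : 'M['F_2]_(v, b)) (k r : nat) : Prop :=
  (forall j : 'I_b, #|[set i | H i j != 0%R]| = k) /\
  (forall i : 'I_v, #|[set j | H i j != 0%R]| = r).

Definition ldpc_rate (v b : nat) (H : 'M['F_2]_(v, b)) : rat :=
  ((b - \rank H)%:R / b%:R)%R.

(* Main.v *)
Require Import Defs.
From mathcomp Require Import all_boot all_order all_algebra all_field.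
From mathcomp Require Import ring lra zify.
Import GRing.Theory Num.Theory.
Set Implicit Arguments. Unset Strict Implicit.

Lemma card_trans (P : finType) (S : {set {set P}}) (Q : pred {set P}) :
  #|[set j : 'I_#|S| | Q (enum_val j)]| = #|[set l in S | Q l]|.
Proof.
rewrite -(card_imset _ enum_val_inj); congr (#|pred_of_set _|); apply/setP => l; rewrite inE.
apply/imsetP/andP => [[j Hj ->]|[lS Ql]].
  by rewrite inE in Hj; split => //; apply: enum_valP.
by exists (enum_rank_in lS l); rewrite ?inE enum_rankK_in.
Qed.

Lemma transport (P : finType) (v k : nat) (S : {set {set P}}) (cls' : {set P} -> {set P}) :
  #|P| = v ->
  (forall l, l \in S -> #|l| = k) ->
  (forall x y : P, x != y -> #|[set l in S | (x \in l) && (y \in l)]| = 1) ->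
  (forall l, l \in S -> cls' l \in S) ->
  (forall l0, l0 \in S -> forall x, #|[set l in S | (cls' l == cls' l0) && (x \in l)]| = 1) ->
  exists b (B : 'I_b -> {set 'I_v}), is_RBIBD k 1 B.
Proof.
move=> Hv Hk Hp Hc Hd; subst v.
pose g : 'I_#|P| -> P := enum_val.
have ginj : injective g by apply: enum_val_inj.
have gB : forall l : {set P}, #|[set i | g i \in l]| = #|l|.
  move=> l; rewrite -(card_imset _ ginj); congr (#|pred_of_set _|); apply/setP => z.
  apply/imsetP/idP => [[i]|zl]; first by rewrite inE => ? ->.
  by exists (enum_rank z); rewrite ?inE /g enum_rankK.
exists #|S|, (fun j : 'I_#|S| => [set i | g i \in (enum_val j : {set P})]); split; first split.
- by move=> j; rewrite gB Hk // enum_valP.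
- move=> x y xy; rewrite -(Hp (g x) (g y)); last by rewrite (inj_eq ginj).
  rewrite -card_trans; apply: eq_card => j; by rewrite !inE.
exists (fun j => enum_rank_in (enum_valP j) (cls' (enum_val j))).
move=> c [j0 <-] x.
rewrite -(Hd (enum_val j0) (enum_valP j0) (g x)) -card_trans; apply: eq_card => j; rewrite !inE.
congr (_ && _).
rewrite -(inj_eq enum_val_inj) !enum_rankK_in //; by apply: Hc; apply: enum_valP.
Qed.
Local Open Scope ring_scope.

Definition line (F : finFieldType) n (x d : 'rV[F]_n) : {set 'rV[F]_n} :=
  [set x + t *: d | t : F].
Definition lines (F : finFieldType) n : {set {set 'rV[F]_n}} :=
  [set l | [exists x, exists d, (d != 0) && (l == line x d)]].
Definition dirl (F : finFieldType) n (l : {set 'rV[F]_n}) : {set 'rV[F]_n} :=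
  [set y - z | y in l, z in l].

Lemma mem_line0 (F : finFieldType) n (x d z : 'rV[F]_n) :
  (z \in line x d) = (z - x \in line 0 d).
Proof.
apply/imsetP/imsetP => [[t _ ->]|[t _ E]]; exists t => //.
  by rewrite add0r addrC addKr.
by rewrite -(subrK x z) E add0r addrC.
Qed.

Lemma line_card (F : finFieldType) n (x d : 'rV[F]_n) : d != 0 -> #|line x d| = #|F|.
Proof.
move=> d0; rewrite card_imset // => s t /addrI /eqP.
by rewrite -subr_eq0 -scalerBl scaler_eq0 (negbTE d0) orbF subr_eq0 => /eqP.
Qed.

Lemma line0D (F : finFieldType) n (d a b : 'rV[F]_n) :
  a \in line 0 d -> b \in line 0 d -> a - b \in line 0 d.
Proof.
move=> /imsetP[s _ ->] /imsetP[t _ ->]; apply/imsetP; exists (s - t) => //.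
by rewrite !add0r scalerBl.
Qed.

Lemma line_shift (F : finFieldType) n (x x' d : 'rV[F]_n) :
  x' \in line x d -> line x d = line x' d.
Proof.
rewrite mem_line0 => H; apply/setP => z; rewrite mem_line0 [RHS]mem_line0.
apply/idP/idP => Hz.
  by have := line0D Hz H; rewrite opprB addrA subrK.
have H0 : (0 : 'rV[F]_n) \in line 0 d by apply/imsetP; exists 0; rewrite ?scale0r ?addr0.
have := line0D Hz (line0D H0 H).
by rewrite sub0r opprK addrA subrK.
Qed.

Lemma line_scale (F : finFieldType) n (u : F) (d : 'rV[F]_n) :
  u != 0 -> line 0 (u *: d) = line 0 d.
Proof.
move=> u0; apply/setP => z; apply/imsetP/imsetP => [[t _ ->]|[t _ ->]].
  by exists (t * u) => //; rewrite scalerA.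
by exists (t / u) => //; rewrite scalerA mulfVK.
Qed.

Lemma line_dir_eq (F : finFieldType) n (x d e : 'rV[F]_n) :
  line 0 d = line 0 e -> line x d = line x e.
Proof. by move=> E; apply/setP => z; rewrite (mem_line0 x d z) (mem_line0 x e z) E. Qed.

Lemma line_memx (F : finFieldType) n (x d : 'rV[F]_n) : x \in line x d.
Proof. by apply/imsetP; exists 0; rewrite ?scale0r ?addr0. Qed.

Lemma line_memxd (F : finFieldType) n (x d : 'rV[F]_n) : x + d \in line x d.
Proof. by apply/imsetP; exists 1; rewrite ?scale1r. Qed.

Lemma line_two (F : finFieldType) n (x d y z : 'rV[F]_n) :
  y != z -> y \in line x d -> z \in line x d -> line x d = line y (z - y).
Proof.
move=> yz Hy Hz; rewrite (line_shift Hy); rewrite (line_shift Hy) mem_line0 in Hz.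
case/imsetP: Hz => t _; rewrite add0r => E.
apply: line_dir_eq; rewrite E line_scale //; apply: contra yz => /eqP t0.
by rewrite -subr_eq0 -opprB oppr_eq0 E t0 scale0r.
Qed.

Lemma dirl_line (F : finFieldType) n (x d : 'rV[F]_n) : dirl (line x d) = line 0 d.
Proof.
apply/setP => w; apply/imset2P/imsetP => [[y z /imsetP[s _ ->] /imsetP[t _ ->] ->]|[u _ ->]].
  by exists (s - t) => //; rewrite add0r opprD addrACA subrr add0r scalerBl.
exists (x + u *: d) (x + 0 *: d); rewrite ?line_memx //; first by apply/imsetP; exists u.
  by apply/imsetP; exists 0.
by rewrite scale0r addr0 add0r addrC addKr.
Qed.

Lemma linesP (F : finFieldType) n (l : {set 'rV[F]_n}) :
  reflect (exists x d, d != 0 /\ l = line x d) (l \in lines F n).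
Proof.
rewrite inE; apply: (iffP existsP) => [[x /existsP[d /andP[d0 /eqP ->]]]|[x [d [d0 ->]]]].
  by exists x, d.
by exists x; apply/existsP; exists d; rewrite d0 eqxx.
Qed.

Lemma line_in (F : finFieldType) n (x d : 'rV[F]_n) : d != 0 -> line x d \in lines F n.
Proof. by move=> d0; apply/linesP; exists x, d. Qed.

Lemma affine_design (F : finFieldType) n :
  exists b (B : 'I_b -> {set 'I_(#|F| ^ n)%N}), is_RBIBD #|F| 1 B.
Proof.
apply: (@transport _ _ _ (lines F n) (@dirl F n)).
- by rewrite card_mx mul1n.
- by move=> l /linesP[x [d [d0 ->]]]; rewrite line_card.
- move=> x y xy; apply/eqP/cards1P; exists (line x (y - x)).
  apply/setP => l; rewrite in_set1 in_set; apply/andP/eqP => [[/linesP[x' [d [d0 ->]]] /andP[Hx Hy]]|->].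
    exact: line_two.
  split; first by apply: line_in; rewrite subr_eq0 eq_sym.
  rewrite line_memx /=; apply/imsetP; exists 1 => //; by rewrite scale1r addrC subrK.
- by move=> l /linesP[x [d [d0 ->]]]; rewrite dirl_line line_in.
- move=> l0 /linesP[x0 [d0 [d00 ->]]] x; apply/eqP/cards1P; exists (line x d0).
  apply/setP => l; rewrite in_set1 in_set; apply/andP/eqP => [[/linesP[x' [d [d1 ->]]] /andP[/eqP E Hx]]|->].
    rewrite !dirl_line in E; rewrite (line_shift Hx); exact: line_dir_eq.
  by rewrite line_in // line_memx !dirl_line eqxx.
Qed.
Local Close Scope ring_scope.

Lemma card_pair_sum v b (B : 'I_b -> {set 'I_v}) x y :
  #|[set j | (x \in B j) && (y \in B j)]| = \sum_(j | x \in B j) (y \in B j).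
Proof.
rewrite -sum1_card (eq_bigl (fun j => (x \in B j) && (y \in B j))); last by move=> j; rewrite inE.
by rewrite -big_mkcondr.
Qed.

Lemma bibd_rep v k b (B : 'I_b -> {set 'I_v}) : is_BIBD k 1 B ->
  forall x, #|[set j | x \in B j]| * (k - 1) = v - 1.
Proof.
move=> [Hk Hl] x.
have -> : v - 1 = \sum_(y | y != x) #|[set j | (x \in B j) && (y \in B j)]|.
  rewrite (eq_bigr (fun _ => 1)); last by move=> y; rewrite eq_sym => /Hl.
  rewrite sum1_card -[in LHS](card_ord v) subn1 -(cardC1 x); apply: eq_card => y; by rewrite !inE.

rewrite (eq_bigr (fun y => \sum_(j | x \in B j) (y \in B j))); last by move=> y _; exact: card_pair_sum.
rewrite exchange_big /= -sum1_card big_distrl /=; apply: eq_big => j; first by rewrite inE.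
move=> Hj; rewrite inE in Hj; rewrite mul1n -(Hk j) (cardsD1 x (B j)) Hj add1n subSS.
rewrite subn0 -sum1_card big_mkcond [RHS]big_mkcond /=; apply: eq_bigr => i _; rewrite !inE.
by case: (i == x); case: (i \in B j).
Qed.


Lemma cardE_sum (T : finType) (A : {pred T}) : #|A| = \sum_j (j \in A).
Proof. rewrite -sum1_card big_mkcond /=; apply: eq_bigr => j _; by case: (j \in A). Qed.

Lemma bibd_count v k b (B : 'I_b -> {set 'I_v}) : is_BIBD k 1 B ->
  b * k * (k - 1) = v * (v - 1).
Proof.
move=> H; have Hr := bibd_rep H.
have E1 : \sum_(x < v) #|[set j | x \in B j]| * (k - 1) = v * (v - 1).
  by rewrite (eq_bigr (fun _ => v - 1)) // sum_nat_const card_ord.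
rewrite -E1 -big_distrl /=; congr (_ * _).
rewrite (eq_bigr (fun x => \sum_j (x \in B j))); last by move=> x _; rewrite cardE_sum; apply: eq_bigr => j _; rewrite inE.
rewrite exchange_big /= -[b in b * k](card_ord b) -sum_nat_const; apply: eq_bigr => j _.
by rewrite -(H.1 j) cardE_sum.
Qed.

Lemma resolv_dvd v k b (B : 'I_b -> {set 'I_v}) : is_BIBD k 1 B -> resolvable B ->
  0 < b -> k %| v.
Proof.
move=> H [cls Hc] b0; pose j0 := Ordinal b0.
have Hx := Hc (cls j0) (ex_intro _ j0 erefl).
have -> : v = \sum_(x < v) #|[set j | (cls j == cls j0) && (x \in B j)]|.
  by rewrite (eq_bigr (fun _ => 1)) // sum1_card card_ord.
rewrite (eq_bigr (fun x => \sum_(j | cls j == cls j0) (x \in B j))); last first.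
  move=> x _; rewrite -sum1_card (eq_bigl (fun j => (cls j == cls j0) && (x \in B j))); last by move=> j; rewrite inE.
  rewrite big_mkcondr /=; apply: eq_bigr => j _; by case: (x \in B j).
rewrite exchange_big /= (eq_bigr (fun _ => k)); last by move=> j _; rewrite -(H.1 j) cardE_sum.
by rewrite sum_nat_const dvdn_mull.
Qed.

Lemma rate_bound v b (H : 'M['F_2]_(v, b)) k r : 0 < k -> 0 < r -> 0 < v ->
  b * k = v * r ->
  ((r%:R - k%:R) / r%:R <= ldpc_rate H)%R.
Proof.
move=> k0 r0 v0 E; rewrite /ldpc_rate.
have b0 : 0 < b by rewrite lt0n; apply/negP => /eqP b0; rewrite b0 in E; nia.
have Eq : ((r%:R - k%:R) / r%:R = (b%:R - v%:R) / b%:R :> rat)%R.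
  have Eb : (b%:R = v%:R * r%:R / k%:R :> rat)%R.
    by rewrite -natrM -E natrM mulfK // pnatr_eq0 -lt0n.
  rewrite Eb; field; rewrite ?pnatr_eq0 -?lt0n ?r0 ?v0 ?k0 //.
rewrite Eq ler_pM2r ?invr_gt0 ?ltr0n // natrB ?rank_leq_col // lerD2l lerN2 ler_nat rank_leq_row //.
Qed.

Lemma ldpc_all v k b (B : 'I_b -> {set 'I_v}) : 2 <= k -> 2 <= v -> is_BIBD k 1 B ->
  let r := (v - 1) %/ (k - 1) in
  ldpc_regular (incidence_mx B) k r /\ b = v * r %/ k /\
  ((r%:R - k%:R) / r%:R <= ldpc_rate (incidence_mx B))%R.
Proof.
move=> k2 v2 H r.
have Hr : forall x, #|[set j | x \in B j]| = r.
  by move=> x; rewrite /r -(bibd_rep H x) mulnK // subn_gt0.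
have x0 : 'I_v by exists 0; lia.
have Er : r * (k - 1) = v - 1 by rewrite -(Hr x0) bibd_rep.
have Eb : b * k = v * r.
  apply/eqP; rewrite -(eqn_pmul2r (_ : 0 < k - 1)); last by lia.
  by rewrite (bibd_count H) -mulnA Er.
have r0 : 0 < r by nia.
split; [split|split].
- move=> j; rewrite -(H.1 j); apply: eq_card => i; rewrite !inE mxE.
  by case: (i \in B j); rewrite ?eqxx ?oner_eq0.
- move=> i; rewrite -(Hr i); apply: eq_card => j; rewrite !inE mxE.
  by case: (i \in B j); rewrite ?eqxx ?oner_eq0.
- by rewrite -Eb mulnK //; lia.
- apply: rate_bound => //; lia.
Qed.

Lemma sub1_dvd x m : 0 < x -> (x - 1) %| (x ^ m - 1).
Proof.
move=> x0; elim: m => [|m IH]; first by rewrite expn0 subnn dvdn0.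
have y0 : 0 < x ^ m by rewrite expn_gt0 x0.
have -> : x ^ m.+1 - 1 = x * (x ^ m - 1) + (x - 1).
  rewrite expnS mulnBr muln1; have : x <= x * x ^ m by rewrite leq_pmulr.
  move: (x * x ^ m) => z; lia.
by rewrite dvdn_add // dvdn_mull.
Qed.

Lemma arith1 u z : 0 < u -> u <= z -> z - 1 = z - u + (u - 1).
Proof. lia. Qed.

Lemma arith2 x y : 0 < x -> x < y -> y - 1 <= x - 1 -> False.
Proof. lia. Qed.

Lemma exp_div p a c : 1 < p -> 0 < c -> (p ^ c - 1) %| (p ^ a - 1) ->
  exists m, a = m * c.
Proof.
move=> p1 c0 H; exists (a %/ c).
have Ea := divn_eq a c; move: (a %/ c) (a %% c) (ltn_mod a c) Ea => m s sc Ea.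
rewrite c0 in sc.
have pp : 0 < p by apply: ltnW.
have ps0 : 0 < p ^ s by rewrite expn_gt0 pp.
have Hd : (p ^ c - 1) %| p ^ s * (p ^ (m * c) - 1).
  by rewrite dvdn_mull // mulnC expnM sub1_dvd // expn_gt0 pp.
have E2 : p ^ a - 1 = p ^ s * (p ^ (m * c) - 1) + (p ^ s - 1).
  rewrite Ea expnD mulnBr muln1 [p ^ (m * c) * _]mulnC; apply: arith1 => //.
  by rewrite leq_pmulr // expn_gt0 pp.
rewrite E2 dvdn_addr // in H.
have lt : p ^ s < p ^ c by rewrite ltn_exp2l.
have s0 : p ^ s - 1 = 0.
  apply/eqP; rewrite -leqn0 leqNgt; apply/negP => /dvdn_leq /(_ H).
  by move=> Hle; have := arith2 ps0 lt Hle.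
rewrite Ea; suff -> : s = 0 by rewrite addn0.
case: s {Ea sc lt ps0 Hd E2 H} s0 => // s'; rewrite expnS.
have : p <= p * p ^ s' by rewrite leq_pmulr // expn_gt0 pp.
move: (p * p ^ s') => z Hz /eqP; rewrite subn_eq0 => Hz1; move: (leq_trans p1 (leq_trans Hz Hz1)).
by [].
Qed.

Theorem theorem3 (p a c : nat) :
  prime p -> 1 <= a -> 2 <= p ^ c ->
  let v := p ^ a in let k := p ^ c in let r := (v - 1) %/ (k - 1) in
  (exists (b : nat) (B : 'I_b -> {set 'I_v}),
      is_RBIBD k 1 B /\
      ldpc_regular (incidence_mx B) k r /\
      b = v * r %/ k /\
      ((r%:R - k%:R) / r%:R <= ldpc_rate (incidence_mx B))%R)
  <-> ((k - 1) %| (v - 1) /\ k %| v).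
Proof.
move=> pr a1 k2 v k r.
have p1 := prime_gt1 pr.
have v2 : 2 <= v.
  apply: leq_trans p1 _; rewrite /v -{1}(expn1 p); apply: leq_pexp2l => //; exact: prime_gt0.
split.
  case=> b [B [[Hb Hr] _]].
  have x0 : 'I_v by exists 0; lia.
  have b0 : 0 < b.
    pose y0 : 'I_v := Ordinal (ltnW v2); pose y1 : 'I_v := Ordinal v2.
    have x01 : y0 != y1 by [].
    have := Hb.2 _ _ x01 => H.
    by move: (max_card (mem [set j | (y0 \in B j) && (y1 \in B j)])); rewrite H card_ord.
  split; last exact: resolv_dvd Hb Hr b0.
  by rewrite -(bibd_rep Hb x0) dvdn_mull.
case=> H1 _.
have c0 : 0 < c by case: (c) k2 => //; rewrite expn0.
have [m Ea] := exp_div p1 c0 H1.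
have [F _ HF] := pPrimePowerField pr c0.
have : exists b (B : 'I_b -> {set 'I_v}), is_RBIBD k 1 B.
  by rewrite /v /k Ea mulnC expnM -HF; exact: affine_design.
case=> b [B HB]; exists b, B; split => //.
exact: ldpc_all k2 v2 HB.1.
Qed.
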